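(* Let $A$ be a synaptic algebra, let $p,q\in P$ be in generic position ($p\wedge q=p\wedge q^{\perp}=p^{\perp}\wedge q=p^{\perp}\wedge q^{\perp}=0$), and let $c:=(pqp+p^{\perp}q^{\perp}p^{\perp})^{1/2}$. Then the spectrum of $p+q$ is $\sigma(p+q)=\{1\pm\gamma:\gamma\in\sigma(c)\}$.
   Context: Synaptic algebra (Foulis): $R$ is a real linear associative algebra with unit $1$, and $A\subseteq R$ is a real linear subspace with $1\in A$. For $a,b\in A$ write $aCb$ iff $ab=ba$; $C(a):=\{b\in A: aCb\}$; $CC(a):=\{b\in A: bCd \text{ for all } d\in C(a)\}$. $A$ is a synaptic algebra with enveloping algebra $R$ iff: (SA1) $A$ is a partially ordered archimedean real linear space with positive cone $A^+$, $1$ is an order unit, $\|\cdot\|$ the order-unit norm; (SA2) $a\in A\Rightarrow a^2\in A^+$; (SA3) $a,b\in A^+\Rightarrow aba\in A^+$; (SA4) if $a\in A$, $b\in A^+$, $aba=0$ then $ab=ba=0$; (SA5) if $a\in A^+$ there is $b\in A^+\cap CC(a)$ with $b^2=a$; (SA6) for $a\in A$ there is $p=p^2\in A$ with $ab=0\Leftrightarrow pb=0$ for all $b\in A$; (SA7) if $1\le a$ there is $b\in A$ with $ab=ba=1$; (SA8) if $a,b\in A$, $a_1\le a_2\le\cdots$ are pairwise commuting elements of $C(b)$ with $\|a-a_n\|\to0$, then $a\in C(b)$. $A$ is nondegenerate. $P:=\{p\in A:p=p^2\}$ with inherited order is an orthomodular lattice with $p^{\perp}:=1-p$, meet $\wedge$,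 join $\vee$. For $0\le a$, $a^{1/2}$ is its unique positive square root in $A$. Real numbers $\lambda$ are identified with $\lambda1\in A$. The spectrum of $a\in A$ is $\sigma(a):=\{\lambda\in\mathbb{R}: a-\lambda \text{ is not invertible}\}$, where $b\in A$ is invertible iff there is $d\in A$ with $bd=db=1$. *)

(* Defs.v *)
From HB Require Import structures.
From mathcomp Require Import all_boot all_order all_algebra.
From mathcomp Require Import boolp classical_sets reals.
Set Implicit Arguments. Unset Strict Implicit. Unset Printing Implicit Defensive.
Import Order.TTheory GRing.Theory Num.Theory.
Local Open Scope ring_scope.
Local Open Scope classical_set_scope.

Section Synaptic.
Variables (K : realType) (R : algType K).
(* A : the subspace of R; pos : the positive cone A^+ *)
Variables (A pos : R -> Prop).

Definition sle (a b : R) : Prop := pos (b - a).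

Definition comm (a b : R) : Prop := a * b = b * a.
Definition Cset (a : R) (b : R) : Prop := A b /\ comm a b.
Definition CCset (a : R) (b : R) : Prop :=
  A b /\ forall d, Cset a d -> comm b d.

Definition onorm (a : R) : K :=
  inf [set l : K | 0 < l /\ sle (- (l%:A)) a /\ sle a (l%:A)].

Record synaptic : Prop := {
  sub_one : A 1;
  sub_add : forall a b, A a -> A b -> A (a + b);
  sub_scale : forall (t : K) a, A a -> A (t *: a);
  pos_sub : forall a, pos a -> A a;
  pos_add : forall a b, pos a -> pos b -> pos (a + b);
  pos_scale : forall (t : K) a, 0 <= t -> pos a -> pos (t *: a);
  pos_anti : forall a, pos a -> pos (- a) -> a = 0;
  order_unit : forall a, A a -> exists l : K, sle (- (l%:A)) a /\ sle a (l%:A);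
  archimedean : forall a b, A a -> A b ->
      (forall n : nat, sle (a *+ n) b) -> sle a 0;
  SA2 : forall a, A a -> pos (a ^+ 2);
  SA3 : forall a b, pos a -> pos b -> pos (a * b * a);
  SA4 : forall a b, A a -> pos b -> a * b * a = 0 -> a * b = 0 /\ b * a = 0;
  SA5 : forall a, pos a -> exists b, pos b /\ CCset a b /\ b ^+ 2 = a;
  SA6 : forall a, A a -> exists p, A p /\ p * p = p /\
          forall b, A b -> (a * b = 0 <-> p * b = 0);
  SA7 : forall a, A a -> sle 1 a -> exists b, A b /\ a * b = 1 /\ b * a = 1;
  SA8 : forall (a b : R) (s : nat -> R), A a -> A b ->
      (forall n, Cset b (s n)) ->
      (forall n, sle (s n) (s n.+1)) ->
      (forall n m, comm (s n) (s m)) ->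
      (forall e : K, 0 < e -> exists N, forall n, (N <= n)%N -> onorm (a - s n) < e) ->
      Cset b a;
  nondegenerate : (1 : R) <> 0
}.

Definition proj (p : R) : Prop := A p /\ p * p = p.
Definition perp (p : R) : R := 1 - p.

Definition is_meet (p q r : R) : Prop :=
  proj r /\ sle r p /\ sle r q /\
  forall s, proj s -> sle s p -> sle s q -> sle s r.

Definition generic_position (p q : R) : Prop :=
  is_meet p q 0 /\ is_meet p (perp q) 0 /\
  is_meet (perp p) q 0 /\ is_meet (perp p) (perp q) 0.

Definition invertible (b : R) : Prop :=
  exists d, A d /\ b * d = 1 /\ d * b = 1.
Definition spectrum (a : R) : set K :=
  [set l : K | ~ invertible (a - l%:A)].

End Synaptic.

(* Main.v *)
Require Import Defs.
From HB Require Import structures.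
From mathcomp Require Import all_boot all_order all_algebra.
From mathcomp Require Import boolp classical_sets reals.
From mathcomp Require Import lra.
Import Order.TTheory GRing.Theory Num.Theory.
Local Open Scope ring_scope.
Set Implicit Arguments. Unset Strict Implicit. Unset Printing Implicit Defensive.

Inductive zt := zA (n : nat) | zN (t : zt) | zD (t u : zt) | z0.
Section Zev.
Variables (V : zmodType) (e : seq V).
Fixpoint zev t : V :=
  match t with zA n => nth 0 e n | zN t => - zev t
  | zD t u => zev t + zev u | z0 => 0 end.
End Zev.
Arguments zev {V} e t.
Fixpoint zco (t : zt) (n : nat) : int :=
  match t with zA m => ((m == n) : nat)%:Z | zN t => - zco t n
  | zD t u => zco t n + zco u n | z0 => 0 end.

Lemma zev_sum (V : zmodType) (e : seq V) t :
  zev e t = \sum_(i < size e) (nth 0 e i) *~ zco t i.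
Proof.
elim: t => [n|t IH|t IHt u IHu|] /=.
- case: (ltnP n (size e)) => hn.
    rewrite (bigD1 (Ordinal hn)) //= eqxx mulr1z big1 ?addr0 // => i hi.
    by rewrite eqn_leq; case: (i =P Ordinal hn) hi => [->|H] //= _;
      have -> : (n <= i <= n)%N = false by apply/negP => /andP [] a b;
        apply: H; apply: val_inj => /=; apply/eqP; rewrite eqn_leq b a.
  rewrite nth_default // big1 // => i _.
  have -> : (n == i) = false by apply/negP => /eqP ei; move: (ltn_ord i); rewrite -ei ltnNge hn.
  by rewrite mulr0z.
- by rewrite IH -sumrN; apply: eq_bigr => i _; rewrite mulrNz.
- by rewrite IHt IHu -big_split; apply: eq_bigr => i _; rewrite mulrzDr.
- by rewrite big1 // => i _; rewrite mulr0z.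
Qed.

Lemma zcheck (V : zmodType) (e : seq V) t u :
  all (fun i => zco t i == zco u i) (iota 0 (size e)) -> zev e t = zev e u.
Proof.
move=> /allP H; rewrite !zev_sum; apply: eq_bigr => i _.
by rewrite (eqP (H i _)) // mem_iota /= ltn_ord.
Qed.

Lemma zcheck' (V : zmodType) (e : seq V) t u n : size e = n ->
  all (fun i => zco t i == zco u i) (iota 0 n) -> zev e t = zev e u.
Proof. by move=> <-; apply: zcheck. Qed.

Ltac zidx x l :=
  match l with
  | ?y :: _ => constr:(ltac:(unify x y; exact 0%N) : nat)
  | _ :: ?l' => let n := zidx x l' in constr:(S n)
  end.

Ltac zreify t l :=
  match t with
  | 0 => constr:((z0, l))
  | ?a + ?b =>
      let r1 := zreify a l in
      match r1 with (?ta, ?l1) =>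
        let r2 := zreify b l1 in
        match r2 with (?tb, ?l2) => constr:((zD ta tb, l2)) end end
  | ?a - ?b =>
      let r1 := zreify a l in
      match r1 with (?ta, ?l1) =>
        let r2 := zreify b l1 in
        match r2 with (?tb, ?l2) => constr:((zD ta (zN tb), l2)) end end
  | - ?a =>
      let r1 := zreify a l in
      match r1 with (?ta, ?l1) => constr:((zN ta, l1)) end
  | _ =>
      match l with
      | _ => let n := zidx t l in constr:((zA n, l))
      | _ => let l' := eval cbv [cat] in (l ++ [:: t]) in
             let n := zidx t l' in constr:((zA n, l'))
      end
  end.

Ltac zgoal :=
  match goal with
  | |- @eq ?V ?a ?b =>
      let r1 := zreify a (@nil V) in
      match r1 with (?ta, ?l1) =>
        let r2 := zreify b l1 in
        match r2 with (?tb, ?l2) =>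
          change (zev l2 ta = zev l2 tb);
          let n := eval lazy [size] in (size l2) in
          apply: (@zcheck' _ l2 ta tb n); [reflexivity | vm_compute; reflexivity]
        end end
  end.


Lemma idemR (R : ringType) (e : R) : e * e = e -> forall a, a * e * e = a * e.
Proof. by move=> h a; rewrite -mulrA h. Qed.

Ltac ndist := repeat (rewrite mulrDl || rewrite mulrDr || rewrite mulrBl || rewrite mulrBr
   || rewrite mulNr || rewrite mulrN || rewrite mul1r || rewrite mulr1 || rewrite opprK
   || rewrite mulrA || rewrite opprD || rewrite opprB).

Ltac ndistS := repeat (rewrite mulrDl || rewrite mulrDr || rewrite mulrBl || rewrite mulrBr
   || rewrite mulNr || rewrite mulrN || rewrite mul1r || rewrite mulr1 || rewrite opprK
   || rewrite mulrA || rewrite opprD || rewrite opprB || rewrite mulr_algl || rewrite mulr_algr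
   || rewrite -scalerAl || rewrite -scalerAr || rewrite scalerDr || rewrite scalerBr || rewrite scalerN || rewrite scaleNr || rewrite scalerA).

Ltac nidem H := repeat (rewrite H || rewrite (idemR H)).
Ltac nidem2 H1 H2 := repeat (rewrite H1 || rewrite (idemR H1) || rewrite H2 || rewrite (idemR H2)).

Section S.
Variables (K : realType) (R : algType K) (A pos : R -> Prop).
Hypothesis HA : synaptic A pos.

Lemma A0 : A 0.
Proof. rewrite -(scale0r (1:R)); exact: (sub_scale HA) (sub_one HA). Qed.
Lemma AN a : A a -> A (- a).
Proof. move=> h; rewrite -scaleN1r; exact: (sub_scale HA). Qed.
Lemma AD a b : A a -> A b -> A (a + b).
Proof. exact: (sub_add HA). Qed.
Lemma AB a b : A a -> A b -> A (a - b).
Proof. by move=> ha hb; apply: AD => //; apply: AN. Qed.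
Lemma AZ (k : K) a : A a -> A (k *: a).
Proof. exact: (sub_scale HA). Qed.
Lemma A1 : A 1. Proof. exact: sub_one HA. Qed.
Lemma Aalg (k : K) : A (k%:A).
Proof. exact: AZ A1. Qed.
Lemma Asq a : A a -> A (a * a).
Proof. move=> h; rewrite -expr2; exact: (pos_sub HA) (SA2 HA h). Qed.
Lemma Ajor a b : A a -> A b -> A (a * b + b * a).
Proof.
move=> ha hb.
have -> : a * b + b * a = (a + b) * (a + b) - a * a - b * b by ndist; zgoal.
by apply: AB; [apply: AB; [apply: Asq; apply: AD|apply: Asq]|apply: Asq].
Qed.

Lemma half2 (x : R) : x = (2:K)^-1 *: (x *+ 2).
Proof. by rewrite -scaler_nat scalerA mulVf ?scale1r // pnatr_eq0. Qed.

Lemma Aaba a b : A a -> A b -> A (a * b * a).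
Proof.
move=> ha hb; rewrite [a * b * a]half2.
have -> : (a * b * a) *+ 2 = (a * (a*b+b*a) + (a*b+b*a) * a) - (a * a * b + b * (a * a)).
  by rewrite mulr2n; ndist; zgoal.
apply: AZ; apply: AB; last by apply: Ajor => //; apply: Asq.
by apply: Ajor => //; apply: Ajor.
Qed.

Lemma Acomm a b : A a -> A b -> comm a b -> A (a * b).
Proof.
move=> ha hb hab; rewrite [a * b]half2.
have -> : (a * b) *+ 2 = a * b + b * a by rewrite mulr2n {2}hab.
by apply: AZ; apply: Ajor.
Qed.

Lemma pos1 : pos 1.
Proof. by have := SA2 HA A1; rewrite expr1n. Qed.
Lemma posZ (k : K) a : 0 <= k -> pos a -> pos (k *: a).
Proof. exact: (pos_scale HA). Qed.
Lemma posalg (k : K) : 0 <= k -> pos (k%:A).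
Proof. by move=> h; apply: posZ h pos1. Qed.
Lemma posD a b : pos a -> pos b -> pos (a + b).
Proof. exact: (pos_add HA). Qed.
Lemma posA a : pos a -> A a.
Proof. exact: (pos_sub HA). Qed.
Lemma pos_idem e : A e -> e * e = e -> pos e.
Proof. by move=> h he; have := SA2 HA h; rewrite expr2 he. Qed.
Lemma sq0 d : A d -> d * d = 0 -> d = 0.
Proof.
move=> h hd; have hd1 : d * 1 * d = 0 by rewrite mulr1.
have [h1 _] := SA4 HA h pos1 hd1.
by rewrite mulr1 in h1.
Qed.
Lemma posM a b : pos a -> pos b -> comm a b -> pos (a * b).
Proof.
move=> ha hb hab.
have [s [hs [[As hC] hsb]]] := SA5 HA hb.
have sa : comm s a by apply: hC; split; [exact: posA|exact: esym hab].
have -> : a * b = s * a * s by rewrite -hsb expr2 mulrA -sa.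
have H := SA3 HA hs ha; exact H.
Qed.
Lemma pos0 a : pos a -> pos (- a) -> a = 0.
Proof. exact: (pos_anti HA). Qed.

Lemma comm_inv (a b d : R) : b * d = 1 -> d * b = 1 -> comm a b -> comm a d.
Proof.
move=> bd db hab; rewrite /comm.
have -> : a * d = d * b * (a * d) by rewrite db mul1r.
by rewrite -mulrA (mulrA b) -hab -!mulrA bd mulr1.
Qed.

Lemma comm_sym (a b : R) : comm a b -> comm b a.
Proof. by []. Qed.

Lemma inv_mul a b : A a -> A b -> comm a b -> invertible A a -> invertible A b ->
  invertible A (a * b).
Proof.
move=> ha hb hab [da [Ada [ada daa]]] [db [Adb [bdb dbb]]].
have h1 : comm b da by apply: comm_inv ada daa _.
have h2 : comm da db by apply: comm_inv bdb dbb _.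
exists (db * da); split; first by apply: Acomm => //.
split.
  by rewrite -mulrA (mulrA b) bdb mul1r.
by rewrite -mulrA (mulrA da) daa mul1r.
Qed.

Lemma inv_fac a b : A a -> A b -> comm a b -> invertible A (a * b) -> invertible A a.
Proof.
move=> ha hb hab [d [Ad [abd dab]]].
have h1 : comm b (a * b) by rewrite /comm mulrA -hab.
have h2 : comm b d by apply: comm_inv abd dab _.
exists (b * d); split; first by apply: Acomm.
split; first by rewrite mulrA.
by rewrite h2 -mulrA -hab.
Qed.

Lemma inv_opp a : invertible A a -> invertible A (- a).
Proof.
move=> [d [Ad [ad da]]]; exists (- d); split; first exact: AN.
by rewrite !mulrNN.
Qed.

Lemma inv_eps a (e : K) : pos a -> 0 < e -> invertible A (a + e%:A).
Proof.
move=> ha he.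
have Ax : A (e^-1 *: a + 1) by apply: AD; [apply: AZ; exact: posA|exact: A1].
have Hs : sle pos 1 (e^-1 *: a + 1) by rewrite /sle addrK; apply: posZ => //; rewrite invr_ge0 ltW.
have [b [Ab [xb bx]]] := SA7 HA Ax Hs.
have E : e^-1 *: (a + e%:A) = e^-1 *: a + 1.
  by rewrite scalerDr scalerA mulVf ?scale1r // gt_eqF.
exists (e^-1 *: b); split; first exact: AZ.
split.
  by rewrite -scalerAr scalerAl E.
by rewrite -scalerAl scalerAr E.
Qed.


Lemma carrier v : A v -> exists e, [/\ A e, e * e = e,
   (forall b, A b -> (v * b = 0 <-> e * b = 0)), v * e = v /\ e * v = v
 & forall d, A d -> comm v d -> comm e d].
Proof.
move=> Av; have [e [Ae [ee He]]] := SA6 HA Av.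
have A1e : A (1 - e) by apply: AB A1 Ae.
have e1e : e * (1 - e) = 0 by rewrite mulrBr mulr1 ee subrr.
have v1e : v * (1 - e) = 0 by apply/(He _ A1e).
have ve : v * e = v by move: v1e; rewrite mulrBr mulr1 => /eqP; rewrite subr_eq0 => /eqP <-.
have ev : e * v = v.
  have Ad : A ((1 - e) * v + v * (1 - e)) by apply: Ajor.
  have dd : ((1 - e) * v + v * (1 - e)) * ((1 - e) * v + v * (1 - e)) = 0
    by rewrite v1e addr0 -mulrA (mulrA v) v1e mul0r mulr0.
  by have := sq0 Ad dd; rewrite v1e addr0 mulrBl mul1r => /eqP; rewrite subr_eq0 => /eqP <-.
exists e; split => //.
move=> d Ad vd.
pose m := e * d * (1 - e) + (1 - e) * d * e.
have Am : A m.
  have -> : m = (e * d + d * e) - (e * d * e) *+ 2 by rewrite /m mulr2n; ndist; nidem ee; zgoal.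
  apply: AB; first by apply: Ajor.
  by rewrite mulr2n; apply: AD; apply: Aaba.
have vm : v * m = 0.
  by rewrite /m mulrDr !mulrA ve v1e !mul0r addr0 vd -mulrA v1e mulr0.
have em : e * m = 0 by apply/(He _ Am).
have edm : e * d * (1 - e) = 0.
  by move: em; rewrite /m mulrDr !mulrA ee e1e !mul0r addr0.
have mm : m * m = 0.
  rewrite /m edm add0r !mulrA -(mulrA _ e (1 - e)) e1e mulr0 !mul0r //.
have dme : (1 - e) * d * e = 0 by have := sq0 Am mm; rewrite /m edm add0r.
move/eqP: edm; rewrite mulrBr mulr1 subr_eq0 => /eqP h1.
move/eqP: dme; rewrite !mulrBl mul1r subr_eq0 => /eqP h2.
by rewrite /comm h1 h2.
Qed.

Lemma pospart u v s : A u -> A v -> pos s -> v * u = 0 -> u + v = s -> comm s v -> pos u.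
Proof.
move=> Au Av hs vu uvs sv.
have [e [Ae ee He [ve ev] Hc]] := carrier Av.
have A1e : A (1 - e) by apply: AB A1 Ae.
have eu : e * u = 0 by apply/(He _ Au).
have es : comm e s by apply: Hc (posA hs) (esym sv).
have h1 : (1 - e) * s = u by rewrite -uvs mulrBl mul1r mulrDr eu ev add0r addrK.
have c1 : s * (1 - e) = (1 - e) * s by rewrite mulrBr mulrBl mulr1 mul1r es.
have e2 : (1 - e) * (1 - e) = 1 - e by ndist; nidem ee; zgoal.
have h2 : (1 - e) * s * (1 - e) = u by rewrite -mulrA c1 mulrA e2 h1.
rewrite -h2; have H := SA3 HA (pos_idem A1e e2) hs; exact H.
Qed.

Lemma kill u a v P : A u -> A a -> proj A P -> pos u -> comm u a -> comm u P ->
  u * v = 0 -> a *+ 2 = u - v -> pos (- (a * (1 - P))) -> u * (1 - P) = 0.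
Proof.
move=> Au Aa [AP PP] hu ua uP uv a2 ha.
have A1P : A (1 - P) by apply: AB A1 AP.
have u1P : comm u (1 - P) by rewrite /comm mulrBr mulrBl mulr1 mul1r uP.
have At : A (u * (1 - P)) by apply: Acomm.
have e2 : (1 - P) * (1 - P) = 1 - P by ndist; nidem PP; zgoal.
have tt : u * (1 - P) * (u * (1 - P)) = u * u * (1 - P)
  by rewrite mulrA -(mulrA u) -u1P mulrA -mulrA e2.
have E : (u * (a * (1 - P))) *+ 2 = u * (1 - P) * (u * (1 - P)).
  by rewrite tt mulrA -mulrnAl -mulrnAr a2 (mulrBr u) uv subr0.
have cm : comm u (- (a * (1 - P))).
  by rewrite /comm mulrN mulNr mulrA ua -mulrA u1P mulrA.
have hn : pos (- (u * (1 - P) * (u * (1 - P)))).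
  by rewrite -E mulr2n opprD -mulrN; apply: posD; apply: posM.
have hp : pos (u * (1 - P) * (u * (1 - P))) by rewrite -expr2; have H := SA2 HA At; exact H.
exact: sq0 At (pos0 hp hn).
Qed.

Lemma negpart a P Q : A a -> proj A P -> proj A Q -> comm a P -> comm a Q ->
  pos (- (a * (1 - P))) -> pos (- (a * (1 - Q))) -> is_meet A pos P Q 0 -> pos (- a).
Proof.
move=> Aa [AP PP] [AQ QQ] aP aQ hP hQ [_ [_ [_ Hm]]].
have [s [hs [[As hC] hss]]] := SA5 HA (SA2 HA Aa).
have sa : comm s a by apply: hC; split => //; rewrite /comm expr2 mulrA.
have sP : comm s P by apply: hC; split => //; rewrite /comm expr2 -mulrA aP mulrA aP -mulrA.
have sQ : comm s Q by apply: hC; split => //; rewrite /comm expr2 -mulrA aQ mulrA aQ -mulrA.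
have ss : s * s = a * a by rewrite -!expr2.
have Au : A (s + a) by apply: AD.
have Av : A (s - a) by apply: AB.
have uv : (s + a) * (s - a) = 0 by ndist; rewrite sa ss; zgoal.
have vu : (s - a) * (s + a) = 0 by ndist; rewrite sa ss; zgoal.
have hS : pos (s + s) by apply: posD.
have hu : pos (s + a).
  apply: (pospart Au Av hS vu); first by zgoal.
  by rewrite /comm; ndist; rewrite sa; zgoal.
have hv : pos (s - a).
  apply: (pospart Av Au hS uv); first by zgoal.
  by rewrite /comm; ndist; rewrite sa; zgoal.
have ua : comm (s + a) a by rewrite /comm mulrDl mulrDr sa.
have uP : comm (s + a) P by rewrite /comm mulrDl mulrDr sP aP.
have uQ : comm (s + a) Q by rewrite /comm mulrDl mulrDr sQ aQ.
have a2 : a *+ 2 = (s + a) - (s - a) by rewrite mulr2n; zgoal.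
have k1 := kill Au Aa (conj AP PP) hu ua uP uv a2 hP.
have k2 := kill Au Aa (conj AQ QQ) hu ua uQ uv a2 hQ.
have [f [Af ff Hf [uf fu] Hcf]] := carrier Au.
have f0 : forall X, A X -> proj A X -> comm (s + a) X -> (s + a) * (1 - X) = 0 -> sle pos f X.
  move=> X AX [_ XX] uX k.
  have A1X : A (1 - X) by apply: AB A1 AX.
  have f1X : f * (1 - X) = 0 by apply/(Hf _ A1X).
  have fX : comm f X by apply: Hcf.
  have fXf : f * X = f by move/eqP: f1X; rewrite mulrBr mulr1 subr_eq0 => /eqP <-.
  have Xf : X * f = f by rewrite -fX.
  apply: pos_idem; first by apply: AB.
  by ndist; rewrite XX ff fXf Xf; zgoal.
have hfP := f0 P AP (conj AP PP) uP k1.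
have hfQ := f0 Q AQ (conj AQ QQ) uQ k2.
have hf0 := Hm f (conj Af ff) hfP hfQ.
have fz : f = 0.
  apply: pos0; first exact: pos_idem.
  by move: hf0; rewrite /sle sub0r.
have u0 : s + a = 0.
  have : (s + a) * 1 = 0 by apply/(Hf _ A1); rewrite fz mul0r.
  by rewrite mulr1.
rewrite [- a]half2 mulNrn a2 u0 sub0r opprK.
by apply: posZ => //; rewrite invr_ge0 ler0n.
Qed.

Lemma lemG P Q : proj A P -> proj A Q -> is_meet A pos P Q 0 -> invertible A (P + Q) ->
  invertible A (P + Q - P * Q - Q * P).
Proof.
move=> [AP PP] [AQ QQ] Hm [v [Av [uv vu]]].
have hu : pos (P + Q) by apply: posD; apply: pos_idem.
have [l [_ hl]] := order_unit HA Av.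
pose mu := `|l| + 1.
have mu0 : 0 < mu by rewrite /mu; have := normr_ge0 l; lra.
have hmv : pos (mu%:A - v).
  have -> : mu%:A - v = (l%:A - v) + (mu - l)%:A by rewrite scalerBl; zgoal.
  apply: posD => //; apply: posalg; rewrite /mu; have := ler_norm l; lra.
have hprod : pos ((P + Q) * (mu%:A - v)).
  apply: posM => //; by rewrite /comm mulrBr mulrBl uv vu mulr_algr mulr_algl.
pose d := mu^-1.
have hud : pos (P + Q - d%:A).
  have -> : P + Q - d%:A = d *: ((P + Q) * (mu%:A - v)).
    by rewrite mulrBr mulr_algr uv scalerBr scalerA mulVf ?scale1r // gt_eqF.
  by apply: posZ => //; rewrite /d invr_ge0 ltW.
have A1P : A (1 - P) by apply: AB A1 AP.
have A1Q : A (1 - Q) by apply: AB A1 AQ.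
have e2P : (1 - P) * (1 - P) = 1 - P by ndist; nidem PP; zgoal.
have e2Q : (1 - Q) * (1 - Q) = 1 - Q by ndist; nidem QQ; zgoal.
have cP := SA3 HA (pos_idem A1P e2P) hud.
have cQ := SA3 HA (pos_idem A1Q e2Q) hud.
pose w := P + Q - P * Q - Q * P.
have Aw : A w.
  have -> : w = P + Q - (P * Q + Q * P) by rewrite /w opprD addrA.
  by apply: AB; [apply: AD|apply: Ajor].
have Aa : A (d%:A - w) by apply: AB => //; apply: Aalg.
have aP : comm (d%:A - w) P by rewrite /comm /w; ndistS; nidem2 PP QQ; zgoal.
have aQ : comm (d%:A - w) Q by rewrite /comm /w; ndistS; nidem2 PP QQ; zgoal.
have hPn : pos (- ((d%:A - w) * (1 - P))).
  suff -> : - ((d%:A - w) * (1 - P)) = (1 - P) * (P + Q - d%:A) * (1 - P) by [].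
  by rewrite /w; ndistS; nidem2 PP QQ; zgoal.
have hQn : pos (- ((d%:A - w) * (1 - Q))).
  suff -> : - ((d%:A - w) * (1 - Q)) = (1 - Q) * (P + Q - d%:A) * (1 - Q) by [].
  by rewrite /w; ndistS; nidem2 PP QQ; zgoal.
have hn := negpart Aa (conj AP PP) (conj AQ QQ) aP aQ hPn hQn Hm.
rewrite opprB in hn.
have := inv_eps hn (_ : 0 < d); rewrite subrK; apply.
by rewrite /d invr_gt0.
Qed.


Lemma sym_inv x y (s : K) : A x -> A y -> x * y = - (y * x) -> y * y = 1 - x * x ->
  s * s != 1 -> invertible A (x + s%:A) -> invertible A (x - s%:A).
Proof.
move=> Ax Ay xy yy s1 [v [Av [xv vx]]].
have F1 : (x - s%:A) * y = - (y * (x + s%:A)) by ndistS; rewrite xy; zgoal.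
have F2 : y * (x - s%:A) = - ((x + s%:A) * y) by ndistS; rewrite xy; zgoal.
have F3 : (x - s%:A) * (x + s%:A) = x * x - (s * s)%:A by ndistS; zgoal.
have F4 : (x + s%:A) * (x - s%:A) = x * x - (s * s)%:A by ndistS; zgoal.
have G1 : (x - s%:A) * (y * v * y) = x * x - 1.
  by rewrite !mulrA F1 !mulNr -(mulrA y) xv mulr1 yy opprB.
have G2 : (y * v * y) * (x - s%:A) = x * x - 1.
  by rewrite -!mulrA F2 !mulrN (mulrA v) vx mul1r yy opprB.
have ss : s * s - 1 != 0 by rewrite subr_eq0.
have H1 : (x - s%:A) * (y * v * y - (x + s%:A)) = (s * s - 1)%:A.
  by rewrite mulrBr G1 F3 scalerBl scale1r; zgoal.
have H2 : (y * v * y - (x + s%:A)) * (x - s%:A) = (s * s - 1)%:A.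
  by rewrite mulrBl G2 F4 scalerBl scale1r; zgoal.
exists ((s * s - 1)^-1 *: (y * v * y - (x + s%:A))); split.
  apply: AZ; apply: AB; first by apply: Aaba.
  by apply: AD => //; apply: Aalg.
split.
  by rewrite -scalerAr H1 scalerA mulVf ?scale1r.
by rewrite -scalerAl H2 scalerA mulVf ?scale1r.
Qed.

Lemma mainthm (p q c : R) :
  proj A p -> proj A q -> generic_position A pos p q ->
  A c -> pos c -> c ^+ 2 = p * q * p + perp p * perp q * perp p ->
  forall l : K,
    spectrum A (p + q) l <->
    exists2 g : K, spectrum A c g & (l = 1 + g \/ l = 1 - g).
Proof.
move=> [Ap pp] [Aq qq] [Hm1 [_ [_ Hm4]]] Ac _ hc l.
have Hm4' : is_meet A pos (1 - p) (1 - q) 0 := Hm4.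
have Ax : A (p + q - 1) by apply: AB A1; apply: AD.
have Ay : A (p - q) by apply: AB.
have xy : (p + q - 1) * (p - q) = - ((p - q) * (p + q - 1)) by ndist; nidem2 pp qq; zgoal.
have yy : (p - q) * (p - q) = 1 - (p + q - 1) * (p + q - 1) by ndist; nidem2 pp qq; zgoal.
have cc : c * c = (p + q - 1) * (p + q - 1).
  by rewrite -expr2 hc /perp; ndist; nidem2 pp qq; zgoal.
have hl : forall l : K, p + q - l%:A = (p + q - 1) - (l - 1)%:A.
  by move=> l'; rewrite scalerBl scale1r; zgoal.
have zz : forall (z : R) (t : K), (z - t%:A) * (z - (-t)%:A) = z * z - (t * t)%:A.
  by move=> z t; ndistS; zgoal.
have cx : forall t : K, (c - t%:A) * (c - (-t)%:A) = (p + q - 1 - t%:A) * (p + q - 1 - (-t)%:A).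
  by move=> t; rewrite !zz cc.
have cmx : forall (z : R) (t : K), comm (z - t%:A) (z - (-t)%:A).
  by move=> z t; rewrite /comm; ndistS; zgoal.
have Aalgs : forall (z : R) (t : K), A z -> A (z - t%:A) by move=> z t Az; apply: AB => //; apply: Aalg.
split.
  rewrite /spectrum /= hl => hx.
  set t := l - 1.
  case: (pselect (invertible A (c - t%:A))) => h1; last first.
    by exists t => //; left; rewrite /t; lra.
  case: (pselect (invertible A (c - (-t)%:A))) => h2; last first.
    by exists (-t) => //; right; rewrite /t; lra.
  exfalso; apply: hx.
  have := inv_mul (Aalgs _ _ Ac) (Aalgs _ _ Ac) (cmx _ _) h1 h2.
  rewrite cx; apply: inv_fac; [apply: Aalgs| apply: Aalgs| apply: cmx] => //.
move=> [g hg hlg].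
rewrite /spectrum /= in hg.
have one : ~ (invertible A (p + q - 1 - g%:A) /\ invertible A (p + q - 1 - (-g)%:A)).
  move=> [i1 i2]; apply: hg.
  have := inv_mul (Aalgs _ _ Ax) (Aalgs _ _ Ax) (cmx _ _) i1 i2.
  rewrite -cx; apply: inv_fac; [apply: Aalgs| apply: Aalgs| apply: cmx] => //.
have e1 : forall (z : R) (t : K), z - (- t)%:A = z + t%:A by move=> z t; rewrite scaleNr opprK.
have e2 : forall (z : R) (t : K), z + (- t)%:A = z - t%:A by move=> z t; rewrite scaleNr.
have key : ~ invertible A (p + q - 1 - g%:A) /\ ~ invertible A (p + q - 1 - (-g)%:A).
  case: (eqVneq (g * g) 1) => gg; last first.
    split => i1; apply: one; split => //.
      apply: (sym_inv Ax Ay xy yy); first by rewrite mulrNN.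
      by rewrite e2.
    by rewrite e1 in i1; apply: (sym_inv Ax Ay xy yy).
  have ny : ~ invertible A ((p - q) * (p - q)).
    move=> iy; apply: hg.
    have iy' := inv_opp iy.
    have : invertible A ((c - g%:A) * (c - (-g)%:A)).
      suff -> : (c - g%:A) * (c - (-g)%:A) = - ((p - q) * (p - q)) by [].
      by rewrite zz gg cc yy scale1r opprB.
    apply: inv_fac; [apply: Aalgs| apply: Aalgs| apply: cmx] => //.
  have n1 : ~ invertible A (p + q - 1 + 1%:A).
    move=> i; apply: ny.
    have : invertible A (p + q - p * q - q * p).
      apply: lemG => //.
      by move: i; rewrite scale1r subrK.
    suff -> : p + q - p * q - q * p = (p - q) * (p - q) by [].
    by ndist; nidem2 pp qq; zgoal.
  have n2 : ~ invertible A (p + q - 1 - 1%:A).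
    move=> i; apply: ny.
    have : invertible A ((1 - p) + (1 - q) - (1 - p) * (1 - q) - (1 - q) * (1 - p)).
      apply: lemG => //.
      - by split; [apply: AB A1 Ap|ndist; nidem pp; zgoal].
      - by split; [apply: AB A1 Aq|ndist; nidem qq; zgoal].
      suff -> : (1 - p) + (1 - q) = - (p + q - 1 - 1%:A) by apply: inv_opp.
      by rewrite scale1r; zgoal.
    suff -> : (1 - p) + (1 - q) - (1 - p) * (1 - q) - (1 - q) * (1 - p) = (p - q) * (p - q) by [].
    by ndist; nidem2 pp qq; zgoal.
  have : g ^+ 2 == 1 by rewrite expr2 gg.
  rewrite sqrf_eq1 => /orP [] /eqP ->.
    by split => //; rewrite e1.
  split; first by rewrite e1.
  by have -> : (- (-1 : K)) = 1 by lra.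
case: hlg => ->; rewrite /spectrum /=.
  by rewrite hl (_ : 1 + g - 1 = g) //; [case: key | lra].
by rewrite hl (_ : 1 - g - 1 = - g) //; [case: key | lra].
Qed.

End S.

Theorem theorem8p1 (K : realType) (R : algType K) (A pos : R -> Prop)
    (HA : synaptic A pos) (p q c : R) :
  proj A p -> proj A q -> generic_position A pos p q ->
  (* c = (p q p + p^perp q^perp p^perp)^(1/2): the (unique) positive square root in A *)
  A c -> pos c -> c ^+ 2 = p * q * p + perp p * perp q * perp p ->
  forall l : K,
    spectrum A (p + q) l <->
    exists2 g : K, spectrum A c g & (l = 1 + g \/ l = 1 - g).
Proof. exact: mainthm. Qed.
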